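(* For all integers $n,m\ge1$, $$\beta(n)\beta(m)=\sum_{d\mid\gcd(n,m)}\beta(nm/d^2)\,d\,\lambda(d),\qquad \beta(nm)=\sum_{d\mid\gcd(n,m)}\beta(n/d)\beta(m/d)\,d\,\mu^2(d).$$ Consequently $\beta(nm)\ge\beta(n)\beta(m)$ for all $n,m\ge1$.
   Context: $\lambda$ is the Liouville function, $\mu$ the Möbius function, and $\beta(n)=\sum_{d\mid n}d\,\lambda(n/d)$. *)

(* Defs.v *)
From HB Require Import structures.
From mathcomp Require Import all_boot all_order all_algebra.
Set Implicit Arguments. Unset Strict Implicit. Unset Printing Implicit Defensive.
Import Order.TTheory GRing.Theory Num.Theory.
Local Open Scope ring_scope.

Definition bigOmega (n : nat) : nat := (\sum_(p <- primes n) logn p n)%N.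

Definition liouville (n : nat) : int := (-1) ^+ bigOmega n.

Definition squarefree (n : nat) : bool := all (fun p => logn p n == 1%N) (primes n).
Definition moebius (n : nat) : int :=
  if squarefree n then (-1) ^+ size (primes n) else 0.

Definition beta (n : nat) : int :=
  \sum_(d <- divisors n) (d%:Z * liouville (n %/ d)%N).

(* Main.v *)
Require Import Defs.
From HB Require Import structures.
From mathcomp Require Import all_boot all_order all_algebra.
From mathcomp Require Import zify ring lra.
Import Order.TTheory GRing.Theory Num.Theory.
Set Implicit Arguments. Unset Strict Implicit.

Section PartW.

Lemma dvd_coprime_split a b d : coprime a b -> d %| a * b ->
  d = (gcdn d a * gcdn d b)%N.
Proof.
move=> cab dab; apply/eqP; rewrite eqn_dvd; apply/andP; split; last first.
  rewrite Gauss_dvd ?dvdn_gcdl //.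
  exact: (coprime_dvdl (dvdn_gcdr _ _) (coprime_dvdr (dvdn_gcdr _ _) cab)).
have h1 : d %| gcdn d a * b.
  by rewrite muln_gcdl dvdn_gcd dvdn_mulr.
have h2 : d %| gcdn d a * d by rewrite dvdn_mull.
have : d %| gcdn (gcdn d a * b) (gcdn d a * d) by rewrite dvdn_gcd h1 h2.
by rewrite -muln_gcdr [gcdn b d]gcdnC.
Qed.

Lemma primes_lt n N p : (n < N)%N -> p \in primes n -> (p < N)%N.
Proof.
move=> nN; rewrite mem_primes => /and3P[_ n0 pn].
exact: leq_ltn_trans (dvdn_leq n0 pn) nN.
Qed.

Lemma bigOmega_range n N : (n < N)%N ->
  bigOmega n = (\sum_(p < N) logn p n)%N.
Proof.
move=> nN; rewrite /bigOmega -(big_mkord xpredT (fun p => logn p n)).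
rewrite [RHS](bigID (mem (primes n))) /=.
rewrite [X in (_ + X)%N]big1 ?addn0; last first.
  by move=> p /negbTE np; apply/eqP; rewrite -leqn0 leqNgt logn_gt0 np.
rewrite -[RHS]big_filter; apply: perm_big; apply: uniq_perm.
- exact: primes_uniq.
- exact/filter_uniq/iota_uniq.
- move=> p; rewrite mem_filter mem_iota /= add0n.
  rewrite subn0; case pn: (p \in primes n) => //.
  by rewrite (primes_lt nN) ?pn.
Qed.

Lemma bigOmegaM x y : (0 < x)%N -> (0 < y)%N ->
  bigOmega (x * y) = (bigOmega x + bigOmega y)%N.
Proof.
move=> x0 y0; have xy : (x * y < (x * y).+1)%N by [].
have xN : (x < (x * y).+1)%N by rewrite ltnS leq_pmulr.
have yN : (y < (x * y).+1)%N by rewrite ltnS leq_pmull.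
rewrite (bigOmega_range xy) (bigOmega_range xN) (bigOmega_range yN) -big_split /=.
by apply: eq_bigr => p _; rewrite lognM.
Qed.

Local Open Scope ring_scope.

Lemma sum_divisorsM (F : nat -> int) a b : (0 < a)%N -> (0 < b)%N -> coprime a b ->
  \sum_(d <- divisors (a * b)) F d =
  \sum_(d1 <- divisors a) \sum_(d2 <- divisors b) F (d1 * d2)%N.
Proof.
move=> a0 b0 cab.
have -> : \sum_(d1 <- divisors a) \sum_(d2 <- divisors b) F (d1 * d2)%N =
  \sum_(d <- [seq (d1 * d2)%N | d1 <- divisors a, d2 <- divisors b]) F d.
  by rewrite big_allpairs_dep.
have P : perm_eq (divisors (a * b)) [seq (d1 * d2)%N | d1 <- divisors a, d2 <- divisors b].
  apply: uniq_perm.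
  - exact: divisors_uniq.
  - apply: allpairs_uniq; try exact: divisors_uniq.
    move=> [x1 y1] [x2 y2] /allpairsP[[u1 v1] /= [u1a v1b [-> ->]]].
    move=> /allpairsP[[u2 v2] /= [u2a v2b [-> ->]]] /= E.
    rewrite -(dvdn_divisors _ a0) in u1a; rewrite -(dvdn_divisors _ a0) in u2a.
    rewrite -(dvdn_divisors _ b0) in v1b; rewrite -(dvdn_divisors _ b0) in v2b.
    have cu1 : coprime v1 a by rewrite coprime_sym (coprime_dvdr v1b cab).
    have cu2 : coprime v2 a by rewrite coprime_sym (coprime_dvdr v2b cab).
    have cw1 : coprime u1 b by exact: (coprime_dvdl u1a cab).
    have cw2 : coprime u2 b by exact: (coprime_dvdl u2a cab).
    have e1 : gcdn (u1 * v1) a = u1.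
      by rewrite gcdnC Gauss_gcdl; [exact/gcdn_idPr | rewrite coprime_sym].
    have e2 : gcdn (u2 * v2) a = u2.
      by rewrite gcdnC Gauss_gcdl; [exact/gcdn_idPr | rewrite coprime_sym].
    have f1 : gcdn (u1 * v1) b = v1.
      by rewrite gcdnC Gauss_gcdr; [exact/gcdn_idPr | rewrite coprime_sym].
    have f2 : gcdn (u2 * v2) b = v2.
      by rewrite gcdnC Gauss_gcdr; [exact/gcdn_idPr | rewrite coprime_sym].
    have eu : u1 = u2 by rewrite -[LHS]e1 E e2.
    have ev : v1 = v2 by rewrite -[LHS]f1 E f2.
    by rewrite eu ev.
  - move=> d; rewrite -dvdn_divisors ?muln_gt0 ?a0 //.
    apply/idP/allpairsP => [dab | [[u v] /= [ua vb ->]]].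
      exists (gcdn d a, gcdn d b); rewrite /= -!dvdn_divisors // !dvdn_gcdr.
      by split=> //; exact: dvd_coprime_split.
    by move: ua vb; rewrite -!dvdn_divisors // => ua vb; exact: dvdn_mul.
by rewrite (perm_big _ P).
Qed.


Lemma liouvilleM x y : (0 < x)%N -> (0 < y)%N ->
  liouville (x * y) = liouville x * liouville y.
Proof. by move=> x0 y0; rewrite /liouville bigOmegaM // exprD. Qed.

Lemma squarefree_range n N : (0 < n)%N -> (n < N)%N ->
  squarefree n = all (fun p => logn p n <= 1)%N (iota 0 N).
Proof.
move=> n0 nN; apply/allP/allP => H p.
  move=> _; case pn: (p \in primes n); first by rewrite (eqP (H p pn)).
  by move/negbT: pn; rewrite -logn_gt0 -leqNgt => /leq_trans->.
move=> pn; have := H p; rewrite mem_iota add0n (@primes_lt n N p nN pn) => /(_ isT).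
by move: pn; rewrite -logn_gt0; lia.
Qed.

Lemma squarefreeM x y : (0 < x)%N -> (0 < y)%N -> coprime x y ->
  squarefree (x * y) = squarefree x && squarefree y.
Proof.
move=> x0 y0 cxy; have xy : (x * y < (x * y).+1)%N by [].
have xN : (x < (x * y).+1)%N by rewrite ltnS leq_pmulr.
have yN : (y < (x * y).+1)%N by rewrite ltnS leq_pmull.
rewrite (squarefree_range _ xy) ?muln_gt0 ?x0 // (squarefree_range x0 xN).
rewrite (squarefree_range y0 yN) -all_predI; apply: eq_all => p /=.
rewrite lognM //.
case: (posnP (logn p x)) => [->|lx]; first by rewrite add0n.
have px : (p %| x)%N by move: lx; rewrite logn_gt0 mem_primes => /and3P[].
have pp : prime p by move: lx; rewrite logn_gt0 mem_primes => /and3P[].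
have -> : logn p y = 0%N by apply: logn_coprime; exact: coprime_dvdl px cxy.
by rewrite addn0 andbT.
Qed.

Lemma moebius_sq n : moebius n ^+ 2 = (squarefree n)%:R.
Proof.
by rewrite /moebius; case: (squarefree n); rewrite ?expr0n //= -exprM mulnC exprM sqrrN expr1n.
Qed.

Lemma moebius_sqM x y : (0 < x)%N -> (0 < y)%N -> coprime x y ->
  moebius (x * y) ^+ 2 = moebius x ^+ 2 * moebius y ^+ 2.
Proof.
by move=> x0 y0 cxy; rewrite !moebius_sq squarefreeM //; case: (squarefree x); case: (squarefree y).
Qed.

End PartW.

Section PartD.

Lemma divnMM a b d1 d2 : d1 %| a -> d2 %| b -> (a * b) %/ (d1 * d2) = (a %/ d1) * (b %/ d2).
Proof. by move=> h1 h2; rewrite divnMA -divn_mulAC // -muln_divA. Qed.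

Lemma divn_pos n d : 0 < n -> d %| n -> 0 < n %/ d.
Proof. by move=> n0 dn; rewrite divn_gt0 ?(dvdn_gt0 n0 dn) // dvdn_leq. Qed.

Lemma cop_sub x y a b : coprime x y -> a %| x -> b %| y -> coprime a b.
Proof. by move=> c ha hb; exact: coprime_dvdl ha (coprime_dvdr hb c). Qed.

Lemma gcdnMM n1 m1 n2 m2 : coprime (n1 * m1) (n2 * m2) ->
  gcdn (n1 * n2) (m1 * m2) = gcdn n1 m1 * gcdn n2 m2.
Proof.
move=> c.
have c12 : coprime n1 n2 := cop_sub c (dvdn_mulr _ (dvdnn n1)) (dvdn_mulr _ (dvdnn n2)).
have c1 : coprime n1 m2 := cop_sub c (dvdn_mulr _ (dvdnn n1)) (dvdn_mull _ (dvdnn m2)).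
have c2 : coprime n2 m1.
  by rewrite coprime_sym; exact: cop_sub c (dvdn_mull _ (dvdnn m1)) (dvdn_mulr _ (dvdnn n2)).
rewrite [LHS](@dvd_coprime_split n1 n2) ?dvdn_gcdl //.
rewrite [gcdn _ n1]gcdnC [gcdn _ n2]gcdnC !gcdnA gcdnMr gcdnMl.
by rewrite Gauss_gcdl // Gauss_gcdr.
Qed.

Local Open Scope ring_scope.

Lemma betaM a b : (0 < a)%N -> (0 < b)%N -> coprime a b ->
  beta (a * b) = beta a * beta b.
Proof.
move=> a0 b0 cab; rewrite /beta sum_divisorsM // big_distrlr /=.
apply: eq_big_seq => d1; rewrite -dvdn_divisors // => d1a.
apply: eq_big_seq => d2; rewrite -dvdn_divisors // => d2b.
rewrite divnMM // liouvilleM ?divn_pos // PoszM; ring.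
Qed.

Definition pairmult (F : nat -> nat -> int) := forall n1 m1 n2 m2,
  (0 < n1)%N -> (0 < m1)%N -> (0 < n2)%N -> (0 < m2)%N ->
  coprime (n1 * m1) (n2 * m2) -> F (n1 * n2)%N (m1 * m2)%N = F n1 m1 * F n2 m2.

Lemma pairmult_sum (K : nat -> nat -> nat -> int) :
 (forall n1 m1 n2 m2 d1 d2, (0 < n1)%N -> (0 < m1)%N -> (0 < n2)%N -> (0 < m2)%N ->
   coprime (n1 * m1) (n2 * m2) -> (d1 %| gcdn n1 m1)%N -> (d2 %| gcdn n2 m2)%N ->
   K (n1 * n2)%N (m1 * m2)%N (d1 * d2)%N = K n1 m1 d1 * K n2 m2 d2) ->
 pairmult (fun n m => \sum_(d <- divisors (gcdn n m)) K n m d).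
Proof.
move=> HK n1 m1 n2 m2 n10 m10 n20 m20 c /=.
have g1 : (0 < gcdn n1 m1)%N by rewrite gcdn_gt0 n10.
have g2 : (0 < gcdn n2 m2)%N by rewrite gcdn_gt0 n20.
rewrite gcdnMM // sum_divisorsM //; last first.
  exact: cop_sub c (dvdn_mulr _ (dvdn_gcdl _ _)) (dvdn_mulr _ (dvdn_gcdl _ _)).
rewrite big_distrlr /=; apply: eq_big_seq => d1; rewrite -dvdn_divisors // => h1.
apply: eq_big_seq => d2; rewrite -dvdn_divisors // => h2.
exact: HK.
Qed.

Lemma ind2 (Q : nat -> nat -> Prop) : Q 1%N 1%N ->
  (forall p a b n m, prime p -> (0 < n)%N -> (0 < m)%N -> coprime p (n * m) ->
     Q n m -> Q (p ^ a * n)%N (p ^ b * m)%N) ->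
  forall n m, (0 < n)%N -> (0 < m)%N -> Q n m.
Proof.
move=> Q1 HS n m n0 m0.
have [k] := ubnP (n * m)%N; elim: k n m n0 m0 => // k IH n m n0 m0 nmk.
have nm0 : (0 < n * m)%N by rewrite muln_gt0 n0.
case: (ltngtP 1%N (n * m)%N) => [nm1 | | nm1]; last first.
- by move/esym/eqP: nm1; rewrite muln_eq1 => /andP[/eqP-> /eqP->].
- by rewrite ltnNge nm0.
set p := pdiv (n * m).
have pp : prime p by exact: pdiv_prime.
have pin : p \in \pi(n * m) by rewrite pi_pdiv.
rewrite -(partnC p n0) -(partnC p m0) !p_part.
apply: HS => //; try exact: part_gt0.
- rewrite -partnM //.
  have := coprime_partC p p (n * m); rewrite part_pnat_id //; exact: pnat_id.
- apply: IH; try exact: part_gt0.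
  rewrite -partnM // -ltnS; apply: leq_trans nmk; rewrite ltnS.
  rewrite -{2}(partnC p nm0) ltn_Pmull ?part_gt0 //.
  by rewrite p_part_gt1.
Qed.

Lemma agree (F G : nat -> nat -> int) : pairmult F -> pairmult G ->
  (forall p a b, prime p -> F (p ^ a)%N (p ^ b)%N = G (p ^ a)%N (p ^ b)%N) ->
  forall n m, (0 < n)%N -> (0 < m)%N -> F n m = G n m.
Proof.
move=> HF HG Hp; apply: (@ind2 (fun n m => F n m = G n m)).
  by have := Hp 2%N 0%N 0%N isT.
move=> p a b n m pp n0 m0 cp /= e.
have c : coprime (p ^ a * p ^ b) (n * m) by rewrite -expnD coprimeXl.
have pa : (0 < p ^ a)%N by rewrite expn_gt0 prime_gt0.
have pb : (0 < p ^ b)%N by rewrite expn_gt0 prime_gt0.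
by rewrite HF // HG // e Hp.
Qed.

End PartD.

Section PartE.

Lemma divisors_pexp p k : prime p ->
  perm_eq (divisors (p ^ k)) [seq p ^ i | i <- iota 0 k.+1].
Proof.
move=> pp; have p0 : 0 < p ^ k by rewrite expn_gt0 prime_gt0.
apply: uniq_perm; first exact: divisors_uniq.
  by rewrite map_inj_uniq ?iota_uniq //; apply: expnI; exact: prime_gt1.
move=> d; rewrite -dvdn_divisors //; apply/idP/mapP.
  by case/(dvdn_pfactor _ _ pp) => i ik ->; exists i; rewrite // mem_iota add0n ltnS.
by case=> i; rewrite mem_iota add0n ltnS => ik ->; apply/(dvdn_pfactor _ _ pp); exists i.
Qed.

Local Open Scope ring_scope.

Lemma sum_div_pexp (F : nat -> int) p k : prime p ->
  \sum_(d <- divisors (p ^ k)) F d = \sum_(i < k.+1) F (p ^ i)%N.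
Proof.
move=> pp; rewrite (perm_big _ (divisors_pexp k pp)) big_map.
have -> : iota 0 k.+1 = index_iota 0 k.+1 by rewrite /index_iota subn0.
by rewrite big_mkord.
Qed.

Lemma primes_pexp p i : prime p -> primes (p ^ i.+1) = [:: p].
Proof. by move=> pp; rewrite primesX // primes_prime. Qed.

Lemma liouville_pexp p i : prime p -> liouville (p ^ i) = (-1) ^+ i.
Proof.
move=> pp; rewrite /liouville /bigOmega; case: i => [|i].
  by rewrite expn0 (_ : primes 1 = [::]) // big_nil.
by rewrite primes_pexp // big_seq1 lognX logn_prime // eqxx muln1.
Qed.

Lemma moebius_sq_1 : moebius 1 ^+ 2 = 1.
Proof. by rewrite moebius_sq. Qed.

Lemma moebius_sq_p p : prime p -> moebius p ^+ 2 = 1.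
Proof.
move=> pp; rewrite moebius_sq /squarefree primes_prime //= logn_prime // eqxx.
by [].
Qed.

Lemma moebius_sq_pexp p i : prime p -> moebius (p ^ i.+2) ^+ 2 = 0.
Proof.
move=> pp; rewrite moebius_sq /squarefree primes_pexp //= lognX logn_prime // eqxx.
by rewrite muln1.
Qed.

Definition bp p k := beta (p ^ k).

Lemma bp_sum p k : prime p ->
  bp p k = \sum_(i < k.+1) (p%:Z) ^+ i * (-1) ^+ (k - i).
Proof.
move=> pp; rewrite /bp /beta sum_div_pexp //; apply: eq_bigr => i _.
have p0 : (0 < p)%N by exact: prime_gt0.
rewrite -expnB ?(ltn_ord i : i <= k)%N // liouville_pexp //.
by rewrite -!natz natrX.
Qed.

Lemma bp0 p : prime p -> bp p 0 = 1.
Proof. by move=> pp; rewrite bp_sum // big_ord1 /= expr0 mul1r. Qed.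

Lemma bpS p k : prime p -> bp p k.+1 = (p%:Z) ^+ k.+1 - bp p k.
Proof.
move=> pp; rewrite !bp_sum // big_ord_recr /= subnn expr0 mulr1 addrC.
congr (_ + _); rewrite -sumrN; apply: eq_bigr => i _.
by rewrite subSn ?(ltn_ord i : i <= k)%N // exprS mulN1r mulrN.
Qed.

Lemma bp_closed p k : prime p ->
  (p%:Z + 1) * bp p k = p%:Z * (p%:Z) ^+ k + (-1) ^+ k.
Proof.
move=> pp; elim: k => [|k IH]; first by rewrite bp0 // !expr0; ring.
rewrite bpS // mulrBr IH !exprS; ring.
Qed.

Lemma bp_key p a b : prime p ->
  bp p a.+1 * bp p b.+1 + p%:Z * bp p a * bp p b = bp p (a + b).+2.
Proof.
move=> pp; set P := p%:Z.
have P0 : P + 1 != 0.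
  by rewrite /P; lia.
have P2 : (P + 1) ^+ 2 != 0 by rewrite expf_neq0.
apply: (mulfI P2).
have -> : (P + 1) ^+ 2 * (bp p a.+1 * bp p b.+1 + P * bp p a * bp p b) =
  ((P + 1) * bp p a.+1) * ((P + 1) * bp p b.+1) +
   P * ((P + 1) * bp p a) * ((P + 1) * bp p b) by ring.
have -> : (P + 1) ^+ 2 * bp p (a + b).+2 = (P + 1) * ((P + 1) * bp p (a + b).+2) by ring.
rewrite !bp_closed // !exprS !exprD; ring.
Qed.

End PartE.

Section PartF.
Local Open Scope ring_scope.

Definition F1 n m := beta n * beta m.
Definition G1 n m := \sum_(d <- divisors (gcdn n m))
             (beta ((n * m) %/ (d * d))%N * d%:Z * liouville d).
Definition F2 n m := beta (n * m)%N.
Definition G2 n m := \sum_(d <- divisors (gcdn n m))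
             (beta (n %/ d)%N * beta (m %/ d)%N * d%:Z * (moebius d) ^+ 2).

Lemma F1M : pairmult F1.
Proof.
move=> n1 m1 n2 m2 n10 m10 n20 m20 c; rewrite /F1 !betaM //; first ring.
  exact: cop_sub c (dvdn_mull _ (dvdnn m1)) (dvdn_mull _ (dvdnn m2)).
exact: cop_sub c (dvdn_mulr _ (dvdnn n1)) (dvdn_mulr _ (dvdnn n2)).
Qed.

Lemma F2M : pairmult F2.
Proof.
move=> n1 m1 n2 m2 n10 m10 n20 m20 c; rewrite /F2 mulnACA betaM ?muln_gt0 ?n10 ?n20 //.
Qed.

Lemma G1M : pairmult G1.
Proof.
apply: pairmult_sum => n1 m1 n2 m2 d1 d2 n10 m10 n20 m20 c h1 h2.
have d1n : (d1 %| n1)%N := dvdn_trans h1 (dvdn_gcdl _ _).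
have d1m : (d1 %| m1)%N := dvdn_trans h1 (dvdn_gcdr _ _).
have d2n : (d2 %| n2)%N := dvdn_trans h2 (dvdn_gcdl _ _).
have d2m : (d2 %| m2)%N := dvdn_trans h2 (dvdn_gcdr _ _).
have d10 : (0 < d1)%N := dvdn_gt0 n10 d1n.
have d20 : (0 < d2)%N := dvdn_gt0 n20 d2n.
have e1 : (d1 * d1 %| n1 * m1)%N by exact: dvdn_mul.
have e2 : (d2 * d2 %| n2 * m2)%N by exact: dvdn_mul.
have nm1 : (0 < n1 * m1)%N by rewrite muln_gt0 n10.
have nm2 : (0 < n2 * m2)%N by rewrite muln_gt0 n20.
rewrite [(n1 * n2 * _)%N]mulnACA [(d1 * d2 * _)%N]mulnACA divnMM // betaM.
- by rewrite liouvilleM // PoszM; ring.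
- exact: divn_pos.
- exact: divn_pos.
- exact: cop_sub c (dvdn_div e1) (dvdn_div e2).
Qed.

Lemma G2M : pairmult G2.
Proof.
apply: pairmult_sum => n1 m1 n2 m2 d1 d2 n10 m10 n20 m20 c h1 h2.
have d1n : (d1 %| n1)%N := dvdn_trans h1 (dvdn_gcdl _ _).
have d1m : (d1 %| m1)%N := dvdn_trans h1 (dvdn_gcdr _ _).
have d2n : (d2 %| n2)%N := dvdn_trans h2 (dvdn_gcdl _ _).
have d2m : (d2 %| m2)%N := dvdn_trans h2 (dvdn_gcdr _ _).
have d10 : (0 < d1)%N := dvdn_gt0 n10 d1n.
have d20 : (0 < d2)%N := dvdn_gt0 n20 d2n.
have cn : coprime n1 n2 := cop_sub c (dvdn_mulr _ (dvdnn n1)) (dvdn_mulr _ (dvdnn n2)).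
have cm : coprime m1 m2 := cop_sub c (dvdn_mull _ (dvdnn m1)) (dvdn_mull _ (dvdnn m2)).
rewrite !divnMM // !betaM ?divn_pos //.
- rewrite moebius_sqM ?(cop_sub cn d1n d2n) // PoszM; ring.
- exact: cop_sub cm (dvdn_div d1m) (dvdn_div d2m).
- exact: cop_sub cn (dvdn_div d1n) (dvdn_div d2n).
Qed.

Lemma agree_sym (F G : nat -> nat -> int) :
  (forall n m, F n m = F m n) -> (forall n m, G n m = G m n) ->
  (forall p a e, prime p -> F (p ^ a)%N (p ^ (a + e))%N = G (p ^ a)%N (p ^ (a + e))%N) ->
  forall p a b, prime p -> F (p ^ a)%N (p ^ b)%N = G (p ^ a)%N (p ^ b)%N.
Proof.
move=> sF sG H p a b pp; case: (leqP a b) => ab.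
  by rewrite -(subnKC ab) H.
by rewrite sF sG -(subnKC (ltnW ab)) H.
Qed.

Lemma G1_sym n m : G1 n m = G1 m n.
Proof. by rewrite /G1 gcdnC [(n * m)%N]mulnC. Qed.

Lemma G2_sym n m : G2 n m = G2 m n.
Proof. by rewrite /G2 gcdnC; apply: eq_bigr => d _; ring. Qed.

Lemma gcd_pexp p a e : gcdn (p ^ a) (p ^ (a + e)) = (p ^ a)%N.
Proof. by apply/gcdn_idPl; rewrite expnD dvdn_mulr. Qed.

Lemma pp1 p a e : prime p -> F1 (p ^ a)%N (p ^ (a + e))%N = G1 (p ^ a)%N (p ^ (a + e))%N.
Proof.
move=> pp; rewrite /F1 /G1 gcd_pexp sum_div_pexp //.
have p0 : (0 < p)%N by exact: prime_gt0.
have -> : \sum_(i < a.+1) (beta ((p ^ a * p ^ (a + e)) %/ (p ^ i * p ^ i))%N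
          * (p ^ i)%:Z * liouville (p ^ i)) =
   \sum_(i < a.+1) (bp p (a + (a + e) - (i + i)) * (p%:Z) ^+ i * (-1) ^+ i).
  apply: eq_bigr => i _; rewrite liouville_pexp // -!expnD -expnB //; last first.
    by have := ltn_ord i; lia.
  by rewrite -!natz natrX natz /bp.
rewrite -/(bp p a) -/(bp p (a + e)).
elim: a e => [|a IH] e.
  by rewrite big_ord1 !expr0 !mulr1 bp0 // mul1r; congr bp => /=; lia.
rewrite big_ord_recl /= expr0 !mulr1.
have -> : \sum_(i < a.+1) bp p (a.+1 + (a.+1 + e) - (bump 0 i + bump 0 i)) *
    (p%:Z) ^+ bump 0 i * (-1) ^+ bump 0 i =
    - (p%:Z) * \sum_(i < a.+1) (bp p (a + (a + e) - (i + i)) * (p%:Z) ^+ i * (-1) ^+ i).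
  rewrite mulr_sumr; apply: eq_bigr => i _.
  have -> : (a.+1 + (a.+1 + e) - (bump 0 i + bump 0 i) = a + (a + e) - (i + i))%N.
    by rewrite /bump /=; lia.
  by rewrite /bump /= !exprS; ring.
rewrite -IH.
have -> : (a.+1 + e = (a + e).+1)%N by lia.
have -> : (a.+1 + (a + e).+1 - 0 = (a + (a + e)).+2)%N by lia.
by rewrite -bp_key //; ring.
Qed.

Lemma pp2 p a e : prime p -> F2 (p ^ a)%N (p ^ (a + e))%N = G2 (p ^ a)%N (p ^ (a + e))%N.
Proof.
move=> pp; rewrite /F2 /G2 gcd_pexp sum_div_pexp // -expnD -/(bp p _).
have p0 : (0 < p)%N by exact: prime_gt0.
case: a => [|a].
  rewrite big_ord1 /= !expn0 !divn1 moebius_sq_1 -/(bp p 0) -/(bp p (0 + e)) bp0 //.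
  by rewrite mul1r !mulr1.
rewrite !big_ord_recl big1 => [|i _]; last first.
  by rewrite /bump /= moebius_sq_pexp // mulr0.
rewrite /bump /= expn0 !divn1 moebius_sq_1 expn1 moebius_sq_p //.
have -> : (a.+1 + e = (a + e).+1)%N by lia.
rewrite !expnS !mulKn // -!/(bp p _).
have -> : (a.+1 + (a + e).+1 = (a + (a + e)).+2)%N by lia.
rewrite -bp_key // -!expnS /bp !mulr1 addr0; ring.
Qed.

Lemma bp_ge0 p k : prime p -> 0 <= bp p k.
Proof.
move=> pp; have h := bp_closed k pp.
have P2 : 2 <= p%:Z by have := prime_gt1 pp; lia.
have Pk : 1 <= (p%:Z) ^+ k by rewrite exprn_ege1 //; lia.
have PP : 2 <= p%:Z * (p%:Z) ^+ k.
  by rewrite -[2]mulr1; apply: ler_pM => //; lia.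
have sg : (-1) ^+ k = 1 :> int \/ (-1) ^+ k = -1 :> int.
  by rewrite -signr_odd; case: (odd k); [right | left].
have : 0 <= (p%:Z + 1) * bp p k by rewrite h; case: sg => ->; lia.
by rewrite pmulr_rge0 //; lia.
Qed.

Lemma beta_ge0 n : (0 < n)%N -> 0 <= beta n.
Proof.
move=> n0; apply: (@ind2 (fun n m => 0 <= beta n)) n 1%N n0 isT.
  by have := bp_ge0 0 (isT : prime 2).
move=> p a b k m pp k0 m0 cp /= IH.
have c : coprime (p ^ a) k.
  by apply: coprimeXl; exact: cop_sub cp (dvdnn p) (dvdn_mulr _ (dvdnn k)).
have pa : (0 < p ^ a)%N by rewrite expn_gt0 prime_gt0.
rewrite betaM //; apply: mulr_ge0 => //; exact: bp_ge0.
Qed.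

End PartF.

Unset Implicit Arguments.
Local Open Scope ring_scope.

Theorem mainTheorem12 :
  forall n m : nat, (0 < n)%N -> (0 < m)%N ->
    [/\ beta n * beta m =
          \sum_(d <- divisors (gcdn n m))
             (beta ((n * m) %/ (d * d))%N * d%:Z * liouville d),
        beta (n * m)%N =
          \sum_(d <- divisors (gcdn n m))
             (beta (n %/ d)%N * beta (m %/ d)%N * d%:Z * (moebius d) ^+ 2)
      & beta n * beta m <= beta (n * m)%N].
Proof.
move=> n m n0 m0.
have I1 : F1 n m = G1 n m.
  apply: (agree F1M G1M _ n0 m0); apply: agree_sym; last exact: pp1.
    by move=> x y; rewrite /F1 mulrC.
  exact: G1_sym.
have I2 : F2 n m = G2 n m.
  apply: (agree F2M G2M _ n0 m0); apply: agree_sym; last exact: pp2.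
    by move=> x y; rewrite /F2 mulnC.
  exact: G2_sym.
split; [exact: I1 | exact: I2 | ].
rewrite [beta (n * m)%N]I2 /G2 (big_rem 1%N) ?divisor1 //= !divn1 moebius_sq_1 mulr1.
rewrite (_ : (1%N)%:Z = 1) // mulr1 lerDl big_seq; apply: sumr_ge0 => d /mem_rem.
have g0 : (0 < gcdn n m)%N by rewrite gcdn_gt0 n0.
rewrite -dvdn_divisors // => dg.
have dn : (d %| n)%N := dvdn_trans dg (dvdn_gcdl _ _).
have dm : (d %| m)%N := dvdn_trans dg (dvdn_gcdr _ _).
rewrite mulr_ge0 ?sqr_ge0 // mulr_ge0 // mulr_ge0 //; apply: beta_ge0; exact: divn_pos.
Qed.
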